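(* Assume Assumption A, let $\mathscr E$ be the union of the recurrent classes of the limiting chain $X_R$ and $\Delta=E\setminus\mathscr E$ its set of transient states. Then for every $\eta\in\Delta$, $$\lim_{t\to\infty}\limsup_{N\to\infty}\mathbb P_\eta\big[H_{\mathscr E}\ge t\,\alpha_N\big]=0.$$
   Context: Setting: $E$ is a fixed finite set; for each $N\ge1$, $(\eta^N_t)$ is a continuous-time irreducible Markov chain on $E$ with jump rates $R_N(\eta,\xi)$; $\mathbb P_\eta$ is its law started at $\eta$ and $H_A=\inf\{t>0:\eta^N_t\in A\}$. Ordered families: a finite family of sequences of positive reals $(a^r_N)$, $r\in\mathfrak R$, is ordered if for all $r\neq s$, $\arctan(a^r_N/a^s_N)$ converges. Assumption A: (i) for each $\eta\neq\xi$, either $R_N(\eta,\xi)=0$ for all $N$ or $R_N(\eta,\xi)>0$ for all $N$; let $\mathbb B$ be the set of pairs with positive rates. (ii) For every $m\ge1$ the family $\prod_{(\eta,\xi)\in\mathbb B}R_N(\eta,\xi)^{k(\eta,\xi)}$, $k:\mathbb B\to\mathbb Z_+$ with $\sum k=m$, is ordered. Limiting chain: $\alpha_N^{-1}=\sum_\eta\sum_{\xi\ne\eta}R_N(\eta,\xi)$; $R(\eta,\xi)=\lim_N\alpha_NR_N(\eta,\xi)\in[0,1]$ (exists under Assumption A); $X_R$ is the Markov chain on $E$ with rates $R$. *)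

(* Defs.v *)
(* classical reals. Finite state space E given by a complete,
   duplicate-free enumeration. *)
From Stdlib Require Import Reals Lra List Classical ClassicalEpsilon Relations Arith Factorial.
Open Scope R_scope.

Definition dec (P : Prop) : {P} + {~ P} := excluded_middle_informative P.

Definition sumL {E : Type} (l : list E) (f : E -> R) : R :=
  fold_right (fun x acc => f x + acc) 0 l.
Definition prodL {E : Type} (l : list E) (f : E -> R) : R :=
  fold_right (fun x acc => f x * acc) 1 l.
Definition sumN {E : Type} (l : list E) (f : E -> nat) : nat :=
  fold_right (fun x acc => (f x + acc)%nat) 0%nat l.

Definition off_sum {E : Type} (l : list E) (eta : E) (f : E -> R) : R :=
  sumL l (fun xi => if dec (xi = eta) then 0 else f xi).

Definition total_rate {E : Type} (l : list E) (Rt : E -> E -> R) : R :=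
  sumL l (fun eta => off_sum l eta (Rt eta)).
Definition alpha {E : Type} (l : list E) (RN : nat -> E -> E -> R) (N : nat) : R :=
  / total_rate l (RN N).

Definition lim_seq (u : nat -> R) : R := epsilon (inhabits 0) (fun L => Un_cv u L).
Definition series (u : nat -> R) : R := lim_seq (fun n => sum_f_R0 u n).

Definition ordered_family {I : Type} (F : I -> Prop) (a : I -> nat -> R) : Prop :=
  forall r s, F r -> F s -> r <> s ->
    exists L, Un_cv (fun N => atan (a r N / a s N)) L.

(* k : B -> Z_+ encoded as a function on E x E supported in B, with sum k = m *)
Definition admissible {E : Type} (l : list E) (RN : nat -> E -> E -> R) (m : nat)
    (k : E -> E -> nat) : Prop :=
  (forall eta xi, k eta xi <> 0%nat -> eta <> xi /\ forall N, 0 < RN N eta xi) /\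
  sumN l (fun eta => sumN l (fun xi => if dec (xi = eta) then 0%nat else k eta xi)) = m.

Definition monomial {E : Type} (l : list E) (Rt : E -> E -> R) (k : E -> E -> nat) : R :=
  prodL l (fun eta => prodL l (fun xi =>
    if dec (xi = eta) then 1 else Rt eta xi ^ k eta xi)).

Definition assumptionA {E : Type} (l : list E) (RN : nat -> E -> E -> R) : Prop :=
  (forall eta xi, eta <> xi ->
     (forall N, RN N eta xi = 0) \/ (forall N, 0 < RN N eta xi)) /\
  (forall m, (1 <= m)%nat ->
     ordered_family (admissible l RN m) (fun k N => monomial l (RN N) k)).

Definition limit_rate {E : Type} (l : list E) (RN : nat -> E -> E -> R) : E -> E -> R :=
  fun eta xi => lim_seq (fun N => alpha l RN N * RN N eta xi).

Definition edge {E : Type} (Rt : E -> E -> R) : relation E :=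
  fun eta xi => eta <> xi /\ 0 < Rt eta xi.
Definition reach {E : Type} (Rt : E -> E -> R) : relation E :=
  clos_refl_trans E (edge Rt).
Definition irreducible {E : Type} (Rt : E -> E -> R) : Prop :=
  forall x y, reach Rt x y.
(* x is recurrent for the finite chain with rates Rt: its communicating class
   is closed. The set of such x is the union of the recurrent classes. *)
Definition recurrent {E : Type} (Rt : E -> E -> R) (x : E) : Prop :=
  forall y, reach Rt x y -> reach Rt y x.

(* uniformized jump kernel at rate 1/a (a = alpha_N): P = I + a L *)
Definition unif_kernel {E : Type} (l : list E) (a : R) (Rt : E -> E -> R)
    (eta xi : E) : R :=
  if dec (xi = eta) then 1 - a * off_sum l eta (Rt eta) else a * Rt eta xi.

(* probability that the uniformized discrete chain Y started at eta has
   Y_1, ..., Y_k all outside A *)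
Fixpoint avoid {E : Type} (l : list E) (a : R) (Rt : E -> E -> R) (A : E -> Prop)
    (k : nat) (eta : E) : R :=
  match k with
  | O => 1
  | S k' => sumL l (fun xi => unif_kernel l a Rt eta xi *
                              (if dec (A xi) then 0 else avoid l a Rt A k' xi))
  end.

(* P_eta[H_A >= s] for the chain with rates Rt, eta not in A, s >= 0,
   via uniformization with a Poisson clock of rate 1/a (a = alpha_N):
   sum_k e^{-s/a} (s/a)^k / k! * P_eta[Y_1..Y_k not in A]. *)
Definition hit_tail {E : Type} (l : list E) (a : R) (Rt : E -> E -> R)
    (A : E -> Prop) (eta : E) (s : R) : R :=
  series (fun k => exp (- (s / a)) * (s / a) ^ k / INR (fact k) * avoid l a Rt A k eta).

(* Main.v *)
Require Import Defs.
From Stdlib Require Import Reals List.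
From Stdlib Require Import Lra Classical ClassicalEpsilon Relations Arith Lia.
Open Scope R_scope.

Lemma sumL_ext {E} (l : list E) f g : (forall x, f x = g x) -> sumL l f = sumL l g.
Proof. intros H; induction l; simpl; auto. rewrite H, IHl; auto. Qed.

Lemma sumL_le {E} (l : list E) f g : (forall x, f x <= g x) -> sumL l f <= sumL l g.
Proof. intros H; induction l; simpl. lra. specialize (H a); lra. Qed.

Lemma sumL_nonneg {E} (l : list E) f : (forall x, 0 <= f x) -> 0 <= sumL l f.
Proof. intros H; induction l; simpl. lra. specialize (H a); lra. Qed.

Lemma sumL_plus {E} (l : list E) f g : sumL l (fun x => f x + g x) = sumL l f + sumL l g.
Proof. induction l; simpl. lra. rewrite IHl; lra. Qed.

Lemma sumL_scal {E} (l : list E) c f : c * sumL l f = sumL l (fun x => c * f x).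
Proof. induction l; simpl. lra. rewrite <- IHl; lra. Qed.

Lemma sumL_term {E} (l : list E) f a : (forall x, 0 <= f x) -> In a l -> f a <= sumL l f.
Proof.
  intros H; induction l; simpl; intros Hin. destruct Hin.
  destruct Hin as [->|Hin]. pose proof (sumL_nonneg l f H); lra.
  specialize (IHl Hin); specialize (H a0); lra.
Qed.

Lemma sumL_notin {E} (l : list E) f a : ~ In a l -> (forall x, x <> a -> f x = 0) -> sumL l f = 0.
Proof.
  intros Hn H; induction l; simpl; auto. rewrite H, IHl. lra.
  intro; apply Hn; right; auto. intros ->; apply Hn; left; auto.
Qed.

Lemma sumL_single {E} (l : list E) f a : NoDup l -> In a l -> (forall x, x <> a -> f x = 0) -> sumL l f = f a.
Proof.
  intros Hnd; induction l; simpl; intros Hin H. destruct Hin.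
  inversion Hnd; subst. destruct Hin as [->|Hin].
  - rewrite (sumL_notin l f a); auto. lra.
  - rewrite H, IHl; auto. lra. intros ->; auto.
Qed.

Lemma sumL_zero {E} (l : list E) f : (forall x, f x = 0) -> sumL l f = 0.
Proof. intros H; induction l; simpl; auto. rewrite H, IHl; lra. Qed.

Lemma sumL_if {E} (l : list E) (a : E) c g : NoDup l -> In a l ->
  sumL l (fun y => if dec (y = a) then c else g y) = c + sumL l (fun y => if dec (y = a) then 0 else g y).
Proof.
  intros Hnd Hin.
  rewrite (sumL_ext l _ (fun y => (if dec (y = a) then c else 0) + (if dec (y = a) then 0 else g y))).
  rewrite sumL_plus. f_equal. rewrite (sumL_single l _ a); auto.
  destruct (dec (a = a)); tauto. intros x Hx; destruct (dec (x = a)); tauto.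
  intros x; destruct (dec (x = a)); lra.
Qed.

Lemma sumL_strict {E} (l : list E) p g a : NoDup l -> In a l ->
  (forall x, 0 <= p x) -> (forall x, g x <= 1) ->
  sumL l (fun x => p x * g x) + p a * (1 - g a) <= sumL l p.
Proof.
  intros Hnd; induction l; simpl; intros Hin Hp Hg. destruct Hin.
  inversion Hnd; subst. destruct Hin as [->|Hin].
  - assert (sumL l (fun x => p x * g x) <= sumL l p).
    { apply sumL_le. intros x; specialize (Hp x); specialize (Hg x); nra. }
    lra.
  - specialize (IHl H2 Hin Hp Hg). specialize (Hp a0); specialize (Hg a0). nra.
Qed.

Lemma sumN_notin {E} (l : list E) f a : ~ In a l -> (forall x, x <> a -> f x = 0%nat) -> sumN l f = 0%nat.
Proof.
  intros Hn H; induction l; simpl; auto. rewrite H, IHl. lia.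
  intro; apply Hn; right; auto. intros ->; apply Hn; left; auto.
Qed.

Lemma sumN_single {E} (l : list E) f a : NoDup l -> In a l -> (forall x, x <> a -> f x = 0%nat) -> sumN l f = f a.
Proof.
  intros Hnd; induction l; simpl; intros Hin H. destruct Hin.
  inversion Hnd; subst. destruct Hin as [->|Hin].
  - rewrite (sumN_notin l f a); auto.
  - rewrite H, IHl; auto. intros ->; auto.
Qed.

Lemma prodL_notin {E} (l : list E) f a : ~ In a l -> (forall x, x <> a -> f x = 1) -> prodL l f = 1.
Proof.
  intros Hn H; induction l; simpl; auto. rewrite H, IHl. lra.
  intro; apply Hn; right; auto. intros ->; apply Hn; left; auto.
Qed.

Lemma prodL_single {E} (l : list E) f a : NoDup l -> In a l -> (forall x, x <> a -> f x = 1) -> prodL l f = f a.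
Proof.
  intros Hnd; induction l; simpl; intros Hin H. destruct Hin.
  inversion Hnd; subst. destruct Hin as [->|Hin].
  - rewrite (prodL_notin l f a); auto. lra.
  - rewrite H, IHl; auto. lra. intros ->; auto.
Qed.

Lemma prodL_one {E} (l : list E) f : (forall x, f x = 1) -> prodL l f = 1.
Proof. intros H; induction l; simpl; auto. rewrite H, IHl; lra. Qed.

Lemma CV_sumL {E} (l : list E) (f : nat -> E -> R) g :
  (forall x, Un_cv (fun N => f N x) (g x)) -> Un_cv (fun N => sumL l (f N)) (sumL l g).
Proof.
  intros H; induction l; simpl.
  - intros e He; exists 0%nat; intros; unfold R_dist; rewrite Rminus_diag, Rabs_R0; auto.
  - apply CV_plus; auto.
Qed.

Lemma CV_const c : Un_cv (fun _ => c) c.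
Proof. intros e He; exists 0%nat; intros; unfold R_dist; rewrite Rminus_diag, Rabs_R0; auto. Qed.

Lemma CV_inv u l : Un_cv u l -> l <> 0 -> Un_cv (fun n => / u n) (/ l).
Proof.
  intros H Hl. apply (continuity_seq (fun x => / x)); auto.
  apply (continuity_pt_inv (fun x => x)); auto.
  apply derivable_continuous_pt, derivable_pt_id.
Qed.

Lemma CV_le_lim u l a : Un_cv u l -> (forall n, u n <= a) -> l <= a.
Proof.
  intros H Ha. destruct (Rle_dec l a); auto. exfalso.
  destruct (H (l - a)) as [m Hn]. lra. specialize (Hn m (le_n m)); specialize (Ha m).
  unfold R_dist in Hn. rewrite Rabs_left1 in Hn; lra.
Qed.

Lemma CV_ge_lim u l a : Un_cv u l -> (forall n, a <= u n) -> a <= l.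
Proof.
  intros H Ha. destruct (Rle_dec a l); auto. exfalso.
  destruct (H (a - l)) as [m Hn]. lra. specialize (Hn m (le_n m)); specialize (Ha m).
  unfold R_dist in Hn. rewrite Rabs_right in Hn; lra.
Qed.

Lemma CV_squeeze0 u v : Un_cv v 0 -> (forall n, 0 <= u n <= v n) -> Un_cv u 0.
Proof.
  intros H Hb e He. destruct (H e He) as [N HN]. exists N; intros n Hn.
  specialize (HN n Hn). specialize (Hb n). unfold R_dist in *.
  rewrite Rminus_0_r in *. rewrite Rabs_right in *; lra.
Qed.

Lemma lim_seq_spec u L : Un_cv u L -> Un_cv u (lim_seq u).
Proof.
  intros H. unfold lim_seq. apply epsilon_spec. exists L; auto.
Qed.

Lemma lim_seq_eq u L : Un_cv u L -> lim_seq u = L.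
Proof. intros H. eapply UL_sequence; [apply (lim_seq_spec u L H)|exact H]. Qed.


Fixpoint avoidK {E : Type} (l : list E) (P : E -> E -> R) (A : E -> Prop) (k : nat) (x : E) : R :=
  match k with
  | O => 1
  | S k' => sumL l (fun xi => P x xi * (if dec (A xi) then 0 else avoidK l P A k' xi))
  end.

Lemma avoid_eq {E} (l : list E) a Rt A k x :
  avoid l a Rt A k x = avoidK l (unif_kernel l a Rt) A k x.
Proof.
  revert x; induction k; intros x; simpl; auto.
  apply sumL_ext; intros xi. rewrite IHk; auto.
Qed.

Definition stoch {E} (l : list E) (P : E -> E -> R) :=
  (forall x y, 0 <= P x y) /\ (forall x, sumL l (P x) = 1).

Lemma avoidK_bounds {E} (l : list E) P A : stoch l P ->
  forall k x, 0 <= avoidK l P A k x <= 1.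
Proof.
  intros [Hn Hs] k; induction k; intros x; simpl. lra.
  split.
  - apply sumL_nonneg; intros xi. destruct (dec (A xi)). lra.
    specialize (IHk xi); specialize (Hn x xi); nra.
  - rewrite <- (Hs x). apply sumL_le; intros xi. destruct (dec (A xi)).
    specialize (Hn x xi); nra. specialize (IHk xi); specialize (Hn x xi); nra.
Qed.

Lemma avoidK_mono {E} (l : list E) P A : stoch l P ->
  forall k x, avoidK l P A (S k) x <= avoidK l P A k x.
Proof.
  intros HP k; induction k; intros x.
  - apply (avoidK_bounds l P A HP 1).
  - change (avoidK l P A (S (S k)) x) with
      (sumL l (fun xi => P x xi * (if dec (A xi) then 0 else avoidK l P A (S k) xi))).
    change (avoidK l P A (S k) x) with
      (sumL l (fun xi => P x xi * (if dec (A xi) then 0 else avoidK l P A k xi))).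
    apply sumL_le; intros xi. destruct (dec (A xi)). lra.
    destruct HP as [Hn _]. specialize (IHk xi); specialize (Hn x xi); nra.
Qed.

Lemma avoidK_anti {E} (l : list E) P A : stoch l P ->
  forall k k' x, (k <= k')%nat -> avoidK l P A k' x <= avoidK l P A k x.
Proof.
  intros HP k k' x H; induction H. lra.
  pose proof (avoidK_mono l P A HP m x); lra.
Qed.

Lemma avoidK_submult {E} (l : list E) P A n c : stoch l P ->
  (forall y, ~ A y -> avoidK l P A n y <= c) ->
  forall k x, ~ A x -> avoidK l P A (k + n) x <= avoidK l P A k x * c.
Proof.
  intros HP Hc k; induction k; intros x Hx.
  - simpl. rewrite Rmult_1_l; auto.
  - simpl. rewrite Rmult_comm, sumL_scal. apply sumL_le; intros xi.
    destruct (dec (A xi)). lra.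
    destruct HP as [Hn _]. specialize (IHk xi n0); specialize (Hn x xi); nra.
Qed.

Lemma avoidK_geom {E} (l : list E) P A n c : stoch l P -> 0 <= c ->
  (forall y, ~ A y -> avoidK l P A n y <= c) ->
  forall j x, ~ A x -> avoidK l P A (j * n) x <= c ^ j.
Proof.
  intros HP Hc0 Hc j; induction j; intros x Hx.
  - simpl; lra.
  - rewrite Nat.mul_succ_l. pose proof (avoidK_submult l P A n c HP Hc (j * n) x Hx).
    specialize (IHj x Hx). simpl. nra.
Qed.

Lemma CV_avoidK {E} (l : list E) (P : nat -> E -> E -> R) Q A :
  (forall x y, Un_cv (fun N => P N x y) (Q x y)) ->
  forall k x, Un_cv (fun N => avoidK l (P N) A k x) (avoidK l Q A k x).
Proof.
  intros H k; induction k; intros x; simpl.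
  - apply CV_const.
  - apply CV_sumL; intros xi. apply CV_mult; auto.
    destruct (dec (A xi)). apply CV_const. auto.
Qed.


Definition cnt {E} (l : list E) (P : E -> Prop) : nat :=
  length (filter (fun w => if dec (P w) then true else false) l).

Lemma cnt_le {E} (l : list E) (P P' : E -> Prop) : (forall w, P w -> P' w) -> (cnt l P <= cnt l P')%nat.
Proof.
  intros H; unfold cnt; induction l; simpl; auto.
  destruct (dec (P a)), (dec (P' a)); simpl; try lia. exfalso; auto.
Qed.

Lemma cnt_lt {E} (l : list E) (P P' : E -> Prop) w : (forall w, P w -> P' w) ->
  In w l -> P' w -> ~ P w -> (cnt l P < cnt l P')%nat.
Proof.
  intros H; unfold cnt; induction l; simpl; intros Hin H1 H2. destruct Hin.
  destruct Hin as [->|Hin].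
  - destruct (dec (P w)); [tauto|]. destruct (dec (P' w)); [|tauto]. simpl.
    pose proof (cnt_le l P P' H). unfold cnt in H0. lia.
  - specialize (IHl Hin H1 H2).
    destruct (dec (P a)), (dec (P' a)); simpl; try lia. exfalso; auto.
Qed.

Lemma reach_refl {E} (Rt : E -> E -> R) x : reach Rt x x.
Proof. apply rt_refl. Qed.
Lemma reach_trans {E} (Rt : E -> E -> R) x y z : reach Rt x y -> reach Rt y z -> reach Rt x z.
Proof. apply rt_trans. Qed.

Lemma reach_rec {E} (l : list E) (Hfull : forall x, In x l) (Rt : E -> E -> R) :
  forall y, exists z, reach Rt y z /\ recurrent Rt z.
Proof.
  assert (forall n y, (cnt l (reach Rt y) <= n)%nat -> exists z, reach Rt y z /\ recurrent Rt z).
  { induction n; intros y Hy.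
    - exfalso. assert (cnt l (fun _ => False) < cnt l (reach Rt y))%nat.
      { apply (cnt_lt l _ _ y); auto. tauto. apply reach_refl. }
      lia.
    - destruct (classic (recurrent Rt y)) as [Hr|Hr].
      + exists y; split; auto. apply reach_refl.
      + unfold recurrent in Hr. apply not_all_ex_not in Hr. destruct Hr as [z Hz].
        apply imply_to_and in Hz. destruct Hz as [Hyz Hzy].
        assert (cnt l (reach Rt z) < cnt l (reach Rt y))%nat.
        { apply (cnt_lt l _ _ y); auto. intros w Hw. eapply reach_trans; eauto. apply reach_refl. }
        destruct (IHn z) as [z' [H1 H2]]. lia.
        exists z'; split; auto. eapply reach_trans; eauto. }
  intros y. apply (H _ y (le_n _)).
Qed.

Lemma strict_step {E} (l : list E) (Hnd : NoDup l) (Hfull : forall x, In x l) Q A y y1 j :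
  stoch l Q -> 0 < Q y y1 ->
  (if dec (A y1) then 0 else avoidK l Q A j y1) < 1 ->
  avoidK l Q A (S j) y < 1.
Proof.
  intros HQ Hpos Hlt. simpl.
  pose proof (sumL_strict l (Q y) (fun xi => if dec (A xi) then 0 else avoidK l Q A j xi) y1 Hnd (Hfull y1)) as H.
  destruct HQ as [Hn Hs]. rewrite Hs in H.
  assert (Hb : forall x, (if dec (A x) then 0 else avoidK l Q A j x) <= 1).
  { intros x; destruct (dec (A x)). lra. apply (avoidK_bounds l Q A (conj Hn Hs)). }
  specialize (H (Hn y) Hb). simpl in H. nra.
Qed.

Lemma path_lt1 {E} (l : list E) (Hnd : NoDup l) (Hfull : forall x, In x l) Rt Q :
  stoch l Q -> (forall x y, x <> y -> Q x y = Rt x y) ->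
  forall y z, clos_refl_trans_1n E (edge Rt) y z -> recurrent Rt z ->
  recurrent Rt y \/ exists m, forall j, (m <= j)%nat -> avoidK l Q (recurrent Rt) j y < 1.
Proof.
  intros HQ HQR y z H; induction H; intros Hz. left; auto.
  destruct (IHclos_refl_trans_1n Hz) as [Hy|[m Hm]].
  - destruct (classic (recurrent Rt x)) as [Hx|Hx]. left; auto. right.
    exists 1%nat. intros j Hj. destruct j. lia.
    destruct H as [Hxy Hp]. apply (strict_step l Hnd Hfull Q _ x y); auto.
    rewrite HQR; auto. destruct (dec (recurrent Rt y)); tauto || lra.
  - destruct (classic (recurrent Rt x)) as [Hx|Hx]. left; auto. right.
    exists (S m). intros j Hj. destruct j. lia.
    destruct H as [Hxy Hp]. apply (strict_step l Hnd Hfull Q _ x y); auto.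
    rewrite HQR; auto. destruct (dec (recurrent Rt y)). lra. apply Hm; lia.
Qed.

Lemma unif_n {E} (f : nat -> E -> R) (A : E -> Prop) : forall l : list E,
  (forall y, In y l -> ~ A y -> exists m, forall j, (m <= j)%nat -> f j y < 1) ->
  exists n, forall y, In y l -> ~ A y -> forall j, (n <= j)%nat -> f j y < 1.
Proof.
  induction l; intros H. exists 0%nat; intros y [].
  destruct IHl as [n1 Hn1]. intros y Hy; apply H; right; auto.
  destruct (classic (A a)) as [Ha|Ha].
  - exists n1. intros y [->|Hy] Hny j Hj. tauto. auto.
  - destruct (H a (or_introl eq_refl) Ha) as [m Hm]. exists (Nat.max n1 m).
    intros y [->|Hy] Hny j Hj. apply Hm; lia. apply Hn1; auto; lia.
Qed.

Lemma unif_c {E} (g : E -> R) (A : E -> Prop) : forall l : list E,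
  (forall y, In y l -> ~ A y -> g y < 1) ->
  exists c, 0 <= c /\ c < 1 /\ forall y, In y l -> ~ A y -> g y <= c.
Proof.
  induction l; intros H. exists 0; split; [lra|split;[lra|]]; intros y [].
  destruct IHl as [c [H0 [H1 H2]]]. intros y Hy; apply H; right; auto.
  destruct (classic (A a)) as [Ha|Ha].
  - exists c; repeat split; auto. intros y [->|Hy] Hny. tauto. auto.
  - exists (Rmax c (g a)). pose proof (H a (or_introl eq_refl) Ha).
    repeat split. apply Rle_trans with c; auto; apply Rmax_l.
    apply Rmax_lub_lt; auto.
    intros y [->|Hy] Hny. apply Rmax_r. apply Rle_trans with c; auto; apply Rmax_l.
Qed.


Definition ke {E} (x y : E) : E -> E -> nat :=
  fun eta xi => if dec (eta = x /\ xi = y) then 1%nat else 0%nat.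

Lemma sumN_zero {E} (l : list E) f : (forall x, f x = 0%nat) -> sumN l f = 0%nat.
Proof. intros H; induction l; simpl; auto. rewrite H, IHl; auto. Qed.

Lemma ke_adm {E} (l : list E) (Hnd : NoDup l) (Hfull : forall x, In x l) RN x y :
  x <> y -> (forall N, 0 < RN N x y) -> admissible l RN 1 (ke x y).
Proof.
  intros Hxy Hp. split.
  - intros eta xi; unfold ke; destruct (dec (eta = x /\ xi = y)) as [[-> ->]|]; auto.
    intros H; exfalso; auto.
  - rewrite (sumN_single l _ x Hnd (Hfull x)).
    + rewrite (sumN_single l _ y Hnd (Hfull y)).
      destruct (dec (y = x)). subst; tauto. unfold ke. destruct (dec (x = x /\ y = y)); tauto.
      intros xi Hxi. destruct (dec (xi = x)); auto. unfold ke. destruct (dec (x = x /\ xi = y)); tauto.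
    + intros eta Heta. apply sumN_zero. intros xi. destruct (dec (xi = eta)); auto.
      unfold ke. destruct (dec (eta = x /\ xi = y)); tauto.
Qed.

Lemma ke_mon {E} (l : list E) (Hnd : NoDup l) (Hfull : forall x, In x l) (Rt : E -> E -> R) x y :
  x <> y -> monomial l Rt (ke x y) = Rt x y.
Proof.
  intros Hxy. unfold monomial.
  rewrite (prodL_single l _ x Hnd (Hfull x)).
  - rewrite (prodL_single l _ y Hnd (Hfull y)).
    destruct (dec (y = x)). subst; tauto. unfold ke. destruct (dec (x = x /\ y = y)); [|tauto]. simpl; lra.
    intros xi Hxi. destruct (dec (xi = x)); auto. unfold ke. destruct (dec (x = x /\ xi = y)); [tauto|]. simpl; lra.
  - intros eta Heta. apply prodL_one. intros xi. destruct (dec (xi = eta)); auto.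
    unfold ke. destruct (dec (eta = x /\ xi = y)); [tauto|]. simpl; lra.
Qed.

Lemma ke_neq {E} (a b x y : E) : ~ (a = x /\ b = y) -> ke a b <> ke x y.
Proof.
  intros H Heq. assert (ke a b a b = ke x y a b) by (rewrite Heq; auto).
  unfold ke in H0. destruct (dec (a = a /\ b = b)); [|tauto].
  destruct (dec (a = x /\ b = y)); [tauto|]. discriminate.
Qed.

Lemma off_sum_nonneg {E} (l : list E) (Rt : E -> E -> R) eta :
  (forall eta xi, eta <> xi -> 0 <= Rt eta xi) -> 0 <= off_sum l eta (Rt eta).
Proof.
  intros H. apply sumL_nonneg; intros xi. destruct (dec (xi = eta)). lra. apply H; auto.
Qed.

Lemma off_le_total {E} (l : list E) (Hfull : forall x, In x l) (Rt : E -> E -> R) eta :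
  (forall eta xi, eta <> xi -> 0 <= Rt eta xi) -> off_sum l eta (Rt eta) <= total_rate l Rt.
Proof.
  intros H. unfold total_rate. apply (sumL_term l (fun eta => off_sum l eta (Rt eta))); auto.
  intros; apply off_sum_nonneg; auto.
Qed.

Lemma rate_le_total {E} (l : list E) (Hfull : forall x, In x l) (Rt : E -> E -> R) a b :
  (forall eta xi, eta <> xi -> 0 <= Rt eta xi) -> a <> b -> Rt a b <= total_rate l Rt.
Proof.
  intros H Hab. eapply Rle_trans; [|apply (off_le_total l Hfull Rt a H)].
  unfold off_sum. pose proof (sumL_term l (fun xi => if dec (xi = a) then 0 else Rt a xi) b) as Ht.
  simpl in Ht. destruct (dec (b = a)). subst; tauto. apply Ht; auto.
  intros xi; destruct (dec (xi = a)). lra. apply H; auto.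
Qed.

Lemma tot_div {E} (l : list E) (Rt : E -> E -> R) c :
  total_rate l Rt * / c = sumL l (fun eta => sumL l (fun xi => if dec (xi = eta) then 0 else Rt eta xi / c)).
Proof.
  unfold total_rate. rewrite Rmult_comm, sumL_scal. apply sumL_ext; intros eta.
  unfold off_sum. rewrite sumL_scal. apply sumL_ext; intros xi. destruct (dec (xi = eta)); unfold Rdiv; lra.
Qed.

Lemma atan_pos x : 0 < x -> 0 < atan x.
Proof. intros H. rewrite <- atan_0. apply atan_increasing; auto. Qed.

Lemma rate_limit_exists {E} (l : list E) (Hnd : NoDup l) (Hfull : forall x, In x l)
  (RN : nat -> E -> E -> R) (Hnonneg : forall N eta xi, eta <> xi -> 0 <= RN N eta xi)
  (HA : assumptionA l RN) x y : x <> y ->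
  exists L, Un_cv (fun N => alpha l RN N * RN N x y) L.
Proof.
  intros Hxy. destruct HA as [HA1 HA2].
  destruct (HA1 x y Hxy) as [Hz|Hp].
  { exists 0. apply (Un_cv_ext (fun _ => 0)). intros N; rewrite Hz; lra. apply CV_const. }
  assert (Hratio : forall a b, a <> b -> (forall N, 0 < RN N a b) -> ~ (a = x /\ b = y) ->
     exists L, Un_cv (fun N => atan (RN N a b / RN N x y)) L).
  { intros a b Hab Hpab Hne.
    destruct (HA2 1%nat (le_n 1) (ke a b) (ke x y) (ke_adm l Hnd Hfull RN a b Hab Hpab)
       (ke_adm l Hnd Hfull RN x y Hxy Hp) (ke_neq a b x y Hne)) as [L HL].
    exists L. apply (Un_cv_ext _ _ (fun N => f_equal atan (f_equal2 Rdiv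
      (ke_mon l Hnd Hfull (RN N) a b Hab) (ke_mon l Hnd Hfull (RN N) x y Hxy)))) ; auto. }
  assert (Htot : forall N, 0 < total_rate l (RN N)).
  { intros N. eapply Rlt_le_trans; [apply (Hp N)|]. apply rate_le_total; auto. }
  destruct (classic (exists a b, a <> b /\ (forall N, 0 < RN N a b) /\ ~ (a = x /\ b = y) /\
      Un_cv (fun N => atan (RN N a b / RN N x y)) (PI / 2))) as [Hinf|Hfin].
  - destruct Hinf as [a [b [Hab [Hpab [Hne Hcv]]]]].
    exists 0. apply (CV_squeeze0 _ (fun N => cos (atan (RN N a b / RN N x y)) / sin (atan (RN N a b / RN N x y)))).
    + replace 0 with (cos (PI/2) / sin (PI/2)) by (rewrite cos_PI2, sin_PI2; lra).
      apply (continuity_seq (fun t => cos t / sin t)); auto.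
      apply continuity_pt_div. apply continuity_cos. apply continuity_sin. rewrite sin_PI2; lra.
    + intros N. unfold alpha. pose proof (Htot N). pose proof (Hp N). pose proof (Hpab N).
      pose proof (rate_le_total l Hfull (RN N) a b (Hnonneg N) Hab).
      set (th := atan (RN N a b / RN N x y)).
      assert (Hth : 0 < th < PI / 2).
      { split. apply atan_pos. apply Rdiv_lt_0_compat; auto. apply atan_bound. }
      assert (0 < cos th) by (apply cos_gt_0; lra).
      assert (0 < sin th) by (apply sin_gt_0; lra).
      assert (Ht : sin th / cos th = RN N a b / RN N x y) by apply tan_atan.
      assert (cos th / sin th = RN N x y / RN N a b).
      { assert (sin th = RN N a b / RN N x y * cos th) by (rewrite <- Ht; field; lra).
        rewrite H5. field. split; lra. }
      rewrite H5. split. apply Rmult_le_pos. apply Rlt_le, Rinv_0_lt_compat; auto. lra.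
      unfold Rdiv. rewrite Rmult_comm. apply Rmult_le_compat_l. lra.
      apply Rinv_le_contravar; auto.
  - assert (Hterm : forall eta xi, exists L, Un_cv (fun N => if dec (xi = eta) then 0 else RN N eta xi / RN N x y) L).
    { intros eta xi. destruct (dec (xi = eta)). exists 0; apply CV_const.
      destruct (HA1 eta xi (not_eq_sym n)) as [Hz|Hpe].
      - exists 0. apply (Un_cv_ext (fun _ => 0)). intros N; rewrite Hz; unfold Rdiv; lra. apply CV_const.
      - destruct (classic (eta = x /\ xi = y)) as [[-> ->]|Hne].
        + exists 1. apply (Un_cv_ext (fun _ => 1)). intros N. field. specialize (Hp N); lra. apply CV_const.
        + destruct (Hratio eta xi (not_eq_sym n) Hpe Hne) as [L HL].
          assert (HLb : 0 <= L <= PI / 2).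
          { split. apply (CV_ge_lim _ _ _ HL). intros N. apply Rlt_le, atan_pos, Rdiv_lt_0_compat; auto.
            apply (CV_le_lim _ _ _ HL). intros N. apply Rlt_le, atan_bound. }
          assert (L <> PI / 2).
          { intros ->. apply Hfin. exists eta, xi. repeat split; auto. }
          assert (0 < cos L) by (apply cos_gt_0; pose proof PI2_RGT_0; lra).
          exists (sin L / cos L).
          apply (Un_cv_ext (fun N => sin (atan (RN N eta xi / RN N x y)) / cos (atan (RN N eta xi / RN N x y)))).
          intros N. apply tan_atan.
          apply (continuity_seq (fun t => sin t / cos t)); auto.
          apply continuity_pt_div. apply continuity_sin. apply continuity_cos. lra. }
    set (g := fun eta xi => lim_seq (fun N => if dec (xi = eta) then 0 else RN N eta xi / RN N x y)).
    assert (Hg : forall eta xi, Un_cv (fun N => if dec (xi = eta) then 0 else RN N eta xi / RN N x y) (g eta xi)).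
    { intros eta xi. destruct (Hterm eta xi) as [L HL]. apply (lim_seq_spec _ L HL). }
    set (S := sumL l (fun eta => sumL l (fun xi => g eta xi))).
    assert (HS : Un_cv (fun N => total_rate l (RN N) * / RN N x y) S).
    { apply (Un_cv_ext (fun N => sumL l (fun eta => sumL l (fun xi => if dec (xi = eta) then 0 else RN N eta xi / RN N x y)))).
      intros N; rewrite tot_div; auto.
      apply CV_sumL; intros eta. apply CV_sumL; intros xi. apply Hg. }
    assert (HS1 : 1 <= S).
    { apply (CV_ge_lim _ _ _ HS). intros N. pose proof (Hp N).
      pose proof (rate_le_total l Hfull (RN N) x y (Hnonneg N) Hxy).
      apply (Rmult_le_reg_r (RN N x y)); auto. rewrite Rmult_assoc, Rinv_l; lra. }
    exists (/ S). apply (Un_cv_ext (fun N => / (total_rate l (RN N) * / RN N x y))).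
    intros N; unfold alpha. pose proof (Hp N); pose proof (Htot N). field; lra.
    apply CV_inv; auto. lra.
Qed.


Lemma sum_S f n : sum_f_R0 f (S n) = sum_f_R0 f n + f (S n).
Proof. reflexivity. Qed.

Lemma sum_scal_l c f n : sum_f_R0 (fun k => c * f k) n = c * sum_f_R0 f n.
Proof. induction n. simpl; lra. rewrite !sum_S, IHn; lra. Qed.

Lemma exp_term t k : 0 < t -> exp (- t) * t ^ k / INR (fact k) <= INR (S k) / t.
Proof.
  intros Ht.
  assert (H : / INR (fact (S k)) * t ^ (S k) <= exp t).
  { apply Rle_trans with (E1 t (S k)).
    - unfold E1. rewrite sum_S.
      assert (0 <= sum_f_R0 (fun k0 => / INR (fact k0) * t ^ k0) k).
      { apply cond_pos_sum. intros i. apply Rmult_le_pos. apply Rlt_le, Rinv_0_lt_compat, lt_0_INR, lt_O_fact.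
        apply pow_le; lra. }
      lra.
    - apply growing_ineq. intros n. unfold E1. rewrite sum_S.
      assert (0 <= / INR (fact (S n)) * t ^ S n).
      { apply Rmult_le_pos. apply Rlt_le, Rinv_0_lt_compat, lt_0_INR, lt_O_fact. apply pow_le; lra. }
      lra. apply E1_cvg. }
  rewrite exp_Ropp. pose proof (exp_pos t).
  assert (Hf : 0 < INR (fact k)) by apply lt_0_INR, lt_O_fact.
  assert (Hf2 : INR (fact (S k)) = INR (S k) * INR (fact k)) by (rewrite <- mult_INR; auto).
  rewrite Hf2 in H. simpl pow in H.
  assert (Hk : 0 < INR (S k)) by apply lt_0_INR, Nat.lt_0_succ.
  assert (0 <= t ^ k) by (apply pow_le; lra).
  apply (Rmult_le_reg_r (exp t * INR (fact k) * t)). apply Rmult_lt_0_compat; [nra|lra].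
  replace (/ exp t * t ^ k / INR (fact k) * (exp t * INR (fact k) * t)) with (t * t ^ k) by (field; lra).
  replace (INR (S k) / t * (exp t * INR (fact k) * t)) with (INR (S k) * INR (fact k) * exp t) by (field; lra).
  replace (/ (INR (S k) * INR (fact k)) * (t * t ^ k)) with ((t * t ^ k) / (INR (S k) * INR (fact k))) in H by (field; lra).
  apply (Rmult_le_compat_l (INR (S k) * INR (fact k))) in H. 2: nra.
  replace (INR (S k) * INR (fact k) * (t * t ^ k / (INR (S k) * INR (fact k)))) with (t * t ^ k) in H by (field; lra).
  lra.
Qed.

Lemma exp_partial t n : 0 <= t -> sum_f_R0 (fun k => exp (- t) * t ^ k / INR (fact k)) n <= 1.
Proof.
  intros Ht.
  assert (sum_f_R0 (fun k => exp (- t) * t ^ k / INR (fact k)) n = exp (- t) * E1 t n).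
  { unfold E1. induction n. simpl. field.
    rewrite !sum_S, IHn. field. apply INR_fact_neq_0. }
  rewrite H. rewrite exp_Ropp. pose proof (exp_pos t).
  assert (E1 t n <= exp t).
  { apply growing_ineq. intros m. unfold E1. rewrite sum_S.
    assert (0 <= / INR (fact (S m)) * t ^ S m).
    { apply Rmult_le_pos. apply Rlt_le, Rinv_0_lt_compat, lt_0_INR, lt_O_fact. apply pow_le; lra. }
    lra. apply E1_cvg. }
  apply (Rmult_le_reg_l (exp t)); auto. rewrite <- Rmult_assoc, Rinv_r; lra.
Qed.

Lemma ind_sum (K : nat) d n : 0 <= d ->
  sum_f_R0 (fun k => if (k <? K)%nat then d else 0) n <= INR K * d.
Proof.
  intros Hd.
  assert (sum_f_R0 (fun k => if (k <? K)%nat then d else 0) n = INR (Nat.min (S n) K) * d).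
  { induction n; simpl sum_f_R0.
    - destruct (Nat.ltb_spec 0 K). rewrite Nat.min_l by lia. simpl; lra.
      replace K with 0%nat by lia. simpl; lra.
    - rewrite IHn. destruct (Nat.ltb_spec (S n) K).
      rewrite Nat.min_l by lia. rewrite Nat.min_l by lia. rewrite (S_INR (S n)); lra.
      rewrite Nat.min_r by lia. rewrite Nat.min_r by lia. lra. }
  rewrite H. apply Rmult_le_compat_r; auto. apply le_INR; lia.
Qed.

Lemma hit_bound (t : R) (a : nat -> R) (K : nat) : 0 < t ->
  (forall k, 0 <= a k <= 1) -> (forall k, a (S k) <= a k) ->
  series (fun k => exp (- t) * t ^ k / INR (fact k) * a k) <= INR K * INR K / t + a K.
Proof.
  intros Ht Ha Hm.
  assert (Hanti : forall k, (K <= k)%nat -> a k <= a K).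
  { intros k Hk; induction Hk. lra. specialize (Hm m); lra. }
  set (u := fun k => exp (- t) * t ^ k / INR (fact k) * a k).
  assert (Hw : forall k, 0 <= exp (- t) * t ^ k / INR (fact k)).
  { intros k. unfold Rdiv. apply Rmult_le_pos. apply Rmult_le_pos. apply Rlt_le, exp_pos. apply pow_le; lra.
    apply Rlt_le, Rinv_0_lt_compat, lt_0_INR, lt_O_fact. }
  assert (Hu : forall k, 0 <= u k). { intros k; unfold u. apply Rmult_le_pos; auto. apply Ha. }
  set (B := INR K * INR K / t + a K).
  assert (HB : forall n, sum_f_R0 u n <= B).
  { intros n.
    apply Rle_trans with (sum_f_R0 (fun k => (if (k <? K)%nat then INR K / t else 0) + a K * (exp (- t) * t ^ k / INR (fact k))) n).
    - apply sum_Rle. intros k _. unfold u. specialize (Hw k). destruct (Nat.ltb_spec k K).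
      + pose proof (exp_term t k Ht). assert (INR (S k) <= INR K) by (apply le_INR; lia).
        assert (INR (S k) / t <= INR K / t) by (unfold Rdiv; apply Rmult_le_compat_r; [apply Rlt_le, Rinv_0_lt_compat|]; lra).
        pose proof (Ha k); pose proof (Ha K). nra.
      + specialize (Hanti k H). pose proof (Ha k). nra.
    - rewrite sum_plus. unfold B.
      pose proof (ind_sum K (INR K / t) n). 
      assert (0 <= INR K / t) by (unfold Rdiv; apply Rmult_le_pos; [apply pos_INR|apply Rlt_le, Rinv_0_lt_compat; lra]).
      specialize (H H0).
      assert (sum_f_R0 (fun k => a K * (exp (- t) * t ^ k / INR (fact k))) n <= a K).
      { rewrite sum_scal_l. pose proof (exp_partial t n). specialize (Ha K). 
        replace (a K) with (a K * 1) at 2 by lra.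
        apply Rmult_le_compat_l. lra. apply H1; lra. }
      replace (INR K * INR K / t) with (INR K * (INR K / t)) by (unfold Rdiv; lra). lra. }
  assert (Hg : Un_growing (fun n => sum_f_R0 u n)).
  { intros n; simpl. specialize (Hu (S n)); lra. }
  destruct (growing_cv _ Hg) as [L HL].
  { exists B. intros x [i ->]. auto. }
  unfold series. fold u. rewrite (lim_seq_eq _ L HL).
  apply (CV_le_lim _ _ _ HL). auto.
Qed.


Lemma unif_stoch {E} (l : list E) (Hnd : NoDup l) (Hfull : forall x, In x l) a (Rt : E -> E -> R) :
  (forall x y, x <> y -> 0 <= Rt x y) -> 0 <= a -> (forall x, a * off_sum l x (Rt x) <= 1) ->
  stoch l (unif_kernel l a Rt).
Proof.
  intros Hn Ha Hs. split.
  - intros x y. unfold unif_kernel. destruct (dec (y = x)). specialize (Hs x); lra.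
    apply Rmult_le_pos; auto.
  - intros x. unfold unif_kernel.
    rewrite (sumL_if l x (1 - a * off_sum l x (Rt x)) (fun y => a * Rt x y) Hnd (Hfull x)).
    unfold off_sum. rewrite sumL_scal.
    rewrite (sumL_ext l (fun y => if dec (y = x) then 0 else a * Rt x y) (fun x0 => a * (if dec (x0 = x) then 0 else Rt x x0))). lra.
    intros y; destruct (dec (y = x)); lra.
Qed.

Lemma reach_edge {E} (Rt : E -> E -> R) x z : reach Rt x z -> x <> z -> exists a b, edge Rt a b.
Proof.
  intros H; induction H; intros Hne.
  - exists x, y; auto.
  - tauto.
  - destruct (classic (x = y)) as [->|Hxy]. auto. auto.
Qed.


Theorem mainTheorem16 (E : Type) (enum : list E)
  (Hnodup : NoDup enum) (Hfull : forall x : E, In x enum)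
  (RN : nat -> E -> E -> R)
  (Hnonneg : forall N eta xi, eta <> xi -> 0 <= RN N eta xi)
  (Hirr : forall N, irreducible (RN N))
  (HA : assumptionA enum RN) :
  forall eta : E, ~ recurrent (limit_rate enum RN) eta ->
  forall eps : R, 0 < eps ->
  exists T : R, forall t : R, T <= t ->
    exists N0 : nat, forall N : nat, (N0 <= N)%nat ->
      hit_tail enum (alpha enum RN N) (RN N) (recurrent (limit_rate enum RN))
               eta (t * alpha enum RN N) <= eps.
Proof.
  intros eta Heta eps Heps.
  assert (Htot : forall N, 0 < total_rate enum (RN N)).
  { intros N. pose proof Heta as Heta'. unfold recurrent in Heta'. apply not_all_ex_not in Heta'.
    destruct Heta' as [z Hz]. apply imply_to_and in Hz. destruct Hz as [H1 H2].
    assert (eta <> z) by (intros ->; apply H2; apply reach_refl).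
    destruct (reach_edge (RN N) eta z (Hirr N eta z) H) as [a [b [Hab Hp]]].
    eapply Rlt_le_trans; [exact Hp|]. apply rate_le_total; auto. }
  assert (Halpha : forall N, 0 < alpha enum RN N).
  { intros N; unfold alpha; apply Rinv_0_lt_compat; auto. }
  assert (Haoff : forall N x, alpha enum RN N * off_sum enum x (RN N x) <= 1).
  { intros N x. unfold alpha. pose proof (off_le_total enum Hfull (RN N) x (Hnonneg N)).
    pose proof (Htot N). apply (Rmult_le_reg_l (total_rate enum (RN N))); auto.
    rewrite <- Rmult_assoc, Rinv_r; lra. }
  set (Rl := limit_rate enum RN) in *.
  assert (Hcv1 : forall x y, x <> y -> Un_cv (fun N => alpha enum RN N * RN N x y) (Rl x y)).
  { intros x y Hxy. destruct (rate_limit_exists enum Hnodup Hfull RN Hnonneg HA x y Hxy) as [L HL].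
    unfold Rl, limit_rate. apply (lim_seq_spec _ L HL). }
  assert (HRlnn : forall x y, x <> y -> 0 <= Rl x y).
  { intros x y Hxy. apply (CV_ge_lim _ _ _ (Hcv1 x y Hxy)). intros N.
    apply Rmult_le_pos. apply Rlt_le; auto. apply Hnonneg; auto. }
  assert (Hoff : forall x, Un_cv (fun N => alpha enum RN N * off_sum enum x (RN N x)) (off_sum enum x (Rl x))).
  { intros x. apply (Un_cv_ext (fun N => sumL enum (fun y => if dec (y = x) then 0 else alpha enum RN N * RN N x y))).
    - intros N. unfold off_sum. rewrite sumL_scal. apply sumL_ext; intros y. destruct (dec (y = x)); lra.
    - unfold off_sum. apply CV_sumL. intros y. destruct (dec (y = x)). apply CV_const. apply Hcv1; auto. }
  set (Q := unif_kernel enum 1 Rl).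
  set (P := fun N => unif_kernel enum (alpha enum RN N) (RN N)).
  assert (HPst : forall N, stoch enum (P N)).
  { intros N. apply unif_stoch; auto. apply Rlt_le; auto. }
  assert (HQst : stoch enum Q).
  { apply unif_stoch; auto. lra. intros x. rewrite Rmult_1_l.
    apply (CV_le_lim _ _ _ (Hoff x)). intros N; auto. }
  assert (Hcv2 : forall x y, Un_cv (fun N => P N x y) (Q x y)).
  { intros x y. unfold P, Q, unif_kernel. destruct (dec (y = x)).
    - rewrite Rmult_1_l. apply CV_minus. apply CV_const. apply Hoff.
    - rewrite Rmult_1_l. apply Hcv1; auto. }
  assert (HQR : forall x y, x <> y -> Q x y = Rl x y).
  { intros x y Hxy. unfold Q, unif_kernel. destruct (dec (y = x)). subst; tauto. lra. }
  set (A := recurrent Rl) in *.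
  assert (Hlt : forall y, In y enum -> ~ A y -> exists m, forall j, (m <= j)%nat -> avoidK enum Q A j y < 1).
  { intros y _ Hy. destruct (reach_rec enum Hfull Rl y) as [z [Hyz Hz]].
    destruct (path_lt1 enum Hnodup Hfull Rl Q HQst HQR y z (clos_rt_rt1n _ _ _ _ Hyz) Hz) as [H|H].
    tauto. auto. }
  destruct (unif_n (fun j y => avoidK enum Q A j y) A enum Hlt) as [n Hn].
  destruct (unif_c (fun y => avoidK enum Q A n y) A enum (fun y Hy HAy => Hn y Hy HAy n (le_n n))) as [c [Hc0 [Hc1 Hc]]].
  pose proof (avoidK_geom enum Q A n c HQst Hc0 (fun y Hy => Hc y (Hfull y) Hy)) as Hgeom.
  destruct (pow_lt_1_zero c ltac:(rewrite Rabs_right; lra) (eps / 4) ltac:(lra)) as [J HJ].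
  set (K := (J * n)%nat).
  assert (HK : avoidK enum Q A K eta < eps / 4).
  { eapply Rle_lt_trans. apply (Hgeom J eta Heta). eapply Rle_lt_trans. apply Rle_abs. apply HJ; lia. }
  destruct (CV_avoidK enum P Q A Hcv2 K eta (eps / 4) ltac:(lra)) as [N1 HN1].
  exists (2 * INR K * INR K / eps + 1). intros t Ht. exists N1. intros N HN.
  assert (HT0 : 0 <= 2 * INR K * INR K / eps).
  { unfold Rdiv. apply Rmult_le_pos. pose proof (pos_INR K); nra. apply Rlt_le, Rinv_0_lt_compat; auto. }
  assert (Ht0 : 0 < t) by lra.
  unfold hit_tail. replace (t * alpha enum RN N / alpha enum RN N) with t by (pose proof (Halpha N); field; lra).
  eapply Rle_trans.
  { apply (hit_bound t (fun k => avoid enum (alpha enum RN N) (RN N) A k eta) K Ht0).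
    - intros k. rewrite avoid_eq. apply (avoidK_bounds enum (P N) A (HPst N)).
    - intros k. rewrite !avoid_eq. apply (avoidK_mono enum (P N) A (HPst N)). }
  simpl. rewrite avoid_eq. fold (P N).
  specialize (HN1 N HN). unfold R_dist in HN1. apply Rabs_def2 in HN1.
  assert (INR K * INR K / t <= eps / 2).
  { assert (eps * (2 * INR K * INR K / eps) = 2 * INR K * INR K) by (field; lra).
    apply (Rmult_le_reg_r t); auto. unfold Rdiv. rewrite Rmult_assoc, Rinv_l by lra. nra. }
  lra.
Qed.
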